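(* For $\lambda\in[0,1]$ and $x,y\in\mathbb{R}^3$ define $$W_\lambda(x,y)=\lambda\left(\max\{|x|,|y|\}+\frac{(\min\{|x|,|y|\})^2}{|x-y|}\right)+(1-\lambda)\left(|x-y|+\frac23\,\frac{(\min\{|x|,|y|\})^2}{\max\{|x|,|y|\}}\right).$$ Then $$\sup_{\lambda\in[0,1]}\ \inf_{x,y\in\mathbb{R}^3,\ (x,y)\ne(0,0)}\frac{W_\lambda(x,y)}{|x|+|y|}>0.8218.$$
   Context: Conventions: a term $\frac{(\min\{|x|,|y|\})^2}{|x-y|}$ with $x=y\neq0$ is $+\infty$; terms with $\min\{|x|,|y|\}=0$ are $0$. *)

(* Defs.v *)
From HB Require Import structures.
From mathcomp Require Import all_boot all_order all_algebra.
From mathcomp Require Import all_classical all_reals.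
From mathcomp Require Import ereal.
Set Implicit Arguments. Unset Strict Implicit. Unset Printing Implicit Defensive.
Import Order.TTheory GRing.Theory Num.Theory.
Local Open Scope ring_scope.
Local Open Scope classical_set_scope.

Definition enorm (R : realType) (x : 'rV[R]_3) : R :=
  Num.sqrt (\sum_(i < 3) x ord0 i ^+ 2).

Section W.
Variable R : realType.
Implicit Types (x y : 'rV[R]_3) (l : R).

Definition nmax x y : R := Num.max (enorm x) (enorm y).
Definition nmin x y : R := Num.min (enorm x) (enorm y).

Definition term1 x y : \bar R :=
  if nmin x y == 0 then 0%E
  else if x == y then +oo%E
  else ((nmin x y) ^+ 2 / enorm (x - y))%:E.

Definition term2 x y : R :=
  if nmin x y == 0 then 0 else (nmin x y) ^+ 2 / nmax x y.

Definition W l x y : \bar R :=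
  (l%:E * ((nmax x y)%:E + term1 x y)
   + ((1 - l) * (enorm (x - y) + 2 / 3 * term2 x y))%:E)%E.

Definition ratio l x y : \bar R :=
  (W l x y * ((enorm x + enorm y)^-1)%:E)%E.

Definition inf_ratio l : \bar R :=
  ereal_inf [set r | exists x y, (x, y) != (0, 0) /\ r = ratio l x y].

Definition sup_inf_ratio : \bar R :=
  ereal_sup [set inf_ratio l | l in `[0, 1]%classic].
End W.

(* Main.v *)
From Pilot Require Import Defs.
From HB Require Import structures.
From mathcomp Require Import all_boot all_order all_algebra.
From mathcomp Require Import all_classical all_reals.
From mathcomp Require Import ereal.
From mathcomp Require Import ring lra.
Import Order.TTheory GRing.Theory Num.Theory.
Local Open Scope ring_scope.

Section S.
Variable R : realType.

Definition lam : R := 8435%:R / 10000%:R.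
Definition cc : R := 82180001%:R / 100000000%:R.
Definition kk : R := 363328%:R / 1000000%:R.

Lemma step1 (m d : R) : 0 < m -> 0 < d ->
  2 * kk * m <= lam * (m ^+ 2 / d) + (1 - lam) * d.
Proof.
move=> m0 d0.
set u := m ^+ 2 / d.
have ud : u * d = m ^+ 2 by rewrite /u mulfVK // gt_eqF.
have : 0 <= ((1 - lam) * d - kk * m) ^+ 2 by exact: sqr_ge0.
rewrite /lam /kk in ud * => H.
have H2 : 0 <= d * (lam * u + (1 - lam) * d - 2 * kk * m).
  rewrite /lam /kk. nra.
rewrite /lam /kk. nra.
Qed.

Lemma step2 (M m : R) : 0 < m -> m <= M ->
  cc * (M + m) <= lam * M + 2 * kk * m + (1 - lam) * (2/3 * (m ^+ 2 / M)).
Proof.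
move=> m0 mM.
have M0 : 0 < M by apply: lt_le_trans mM.
set v := m ^+ 2 / M.
have vM : v * M = m ^+ 2 by rewrite /v mulfVK // gt_eqF.
set A := lam - cc.
set B := 2 * kk - cc.
have : 0 <= (A * M + B / 2 * m) ^+ 2 by exact: sqr_ge0.
rewrite /A /B /lam /kk /cc in vM * => H.
have H2 : 0 <= M * (lam * M + 2 * kk * m + (1 - lam) * (2/3 * v) - cc * (M + m)).
  rewrite /lam /kk /cc. nra.
rewrite /lam /kk /cc. nra.
Qed.

Lemma key (M m d : R) : 0 < m -> m <= M -> 0 < d ->
  cc * (M + m) <= lam * (M + m ^+ 2 / d) + (1 - lam) * (d + 2/3 * (m ^+ 2 / M)).
Proof.
move=> m0 mM d0.
have := @step1 m d m0 d0; have := @step2 M m m0 mM. lra.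
Qed.

Lemma enorm_ge0 (x : 'rV[R]_3) : 0 <= enorm x.
Proof. exact: sqrtr_ge0. Qed.

Lemma enorm_eq0 (x : 'rV[R]_3) : enorm x = 0 -> x = 0.
Proof.
move=> /eqP; rewrite /enorm sqrtr_eq0 => H.
have H0 : \sum_(i < 3) x ord0 i ^+ 2 = 0.
  apply/eqP; rewrite eq_le H /=; apply: sumr_ge0 => i _; exact: sqr_ge0.
move/psumr_eq0P: H0 => H1.
apply/matrixP => i j; rewrite (ord1 i) mxE.
have := H1 (fun i _ => sqr_ge0 _) j isT.
by move/eqP; rewrite sqrf_eq0 => /eqP.
Qed.

Arguments enorm_eq0 {x}.

Lemma ratio_ge (x y : 'rV[R]_3) : (x, y) != (0, 0) ->
  (cc%:E <= Pilot.Defs.ratio lam x y)%E.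
Proof.
move=> xy0.
have a0 := enorm_ge0 x; have b0 := enorm_ge0 y.
have mM : nmin x y <= nmax x y by rewrite /nmin /nmax ge_min !le_max lexx.
have sMm : nmax x y + nmin x y = enorm x + enorm y by rewrite addr_max_min.
rewrite /Pilot.Defs.ratio /W /term1 /term2.
case: eqP => hmin.
- have [ha|hb] : enorm x = 0 \/ enorm y = 0.
    move: hmin; rewrite /nmin; case: leP => _ ->; by [left|right].
  + have x0 := enorm_eq0 ha; subst x.
    have yn0 : y != 0 by apply: contra xy0 => /eqP ->.
    have bp : 0 < enorm y.
      rewrite lt_def b0 andbT; apply/eqP => /enorm_eq0 /eqP; exact/negP.
    have hM : nmax 0 y = enorm y by rewrite /nmax ha; apply/max_idPr.
    rewrite hM sub0r.
    have -> : enorm (- y) = enorm y.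
      rewrite /enorm; congr Num.sqrt; apply: eq_bigr => i _.
      by rewrite mxE sqrrN.
    rewrite ha add0r addr0 mulr0 addr0 -EFinD -EFinM lee_fin.
    have -> : (lam * enorm y + (1 - lam) * enorm y) / enorm y = 1.
      by field; rewrite gt_eqF.
    rewrite /cc; lra.
  + have y0 := enorm_eq0 hb; subst y.
    have xn0 : x != 0 by apply: contra xy0 => /eqP ->.
    have ap : 0 < enorm x.
      rewrite lt_def a0 andbT; apply/eqP => /enorm_eq0 /eqP; exact/negP.
    have hM : nmax x 0 = enorm x by rewrite /nmax hb; apply/max_idPl.
    rewrite hM subr0.
    rewrite hb addr0 addr0 mulr0 addr0 -EFinD -EFinM lee_fin.
    have -> : (lam * enorm x + (1 - lam) * enorm x) / enorm x = 1.
      by field; rewrite gt_eqF.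
    rewrite /cc; lra.
- have mp : 0 < nmin x y.
    by rewrite lt_def; apply/andP; split; [apply/eqP | rewrite /nmin le_min a0 b0].
  have sp : 0 < enorm x + enorm y by rewrite -sMm; lra.
  have lp : (0 < lam)%R by rewrite /lam; lra.
  case: eqP => hxy.
  + rewrite addey // gt0_muley ?lte_fin // addye // gt0_mulye ?lte_fin ?invr_gt0 //.
    exact: leey.
  + have dp : 0 < enorm (x - y).
      rewrite lt_def enorm_ge0 andbT; apply/eqP => /enorm_eq0 /eqP.
      by rewrite subr_eq0 => /eqP.
    rewrite -EFinD -EFinM lee_fin ler_pdivlMr // -sMm.
    exact: key.
Qed.
End S.

Theorem lemma10 (R : realType) :
  ((8218%:R / 10000%:R : R)%:E < sup_inf_ratio R)%E.
Proof.
apply: (@lt_le_trans _ _ (@cc R)%:E).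
  rewrite lte_fin /cc; lra.
apply: le_ereal_sup_tmp.
exists (inf_ratio (@lam R)).
  exists (@lam R) => //=; rewrite in_itv /= /lam; apply/andP; split; lra.
apply: le_ereal_inf_tmp => r [x [y [xy0 ->]]].
exact: ratio_ge.
Qed.
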